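(* There is a family of classes $(K_f)_{f\in 2^\omega}$ such that for every $f\in 2^\omega$, $K_f\le_c FLO$ and $K_f\perp PF$, and for all distinct $f,g\in 2^\omega$, $K_f\perp K_g$.
   Context: Conventions: every structure is for a finite relational language with universe a subset of $\omega$; a class is a collection of structures for one language closed under isomorphism. $D(\mathcal{A})$ is the atomic diagram of $\mathcal{A}$. A computable transformation from $K$ to $K'$ is a c.e. set $\Phi$ of pairs $(\alpha,\varphi)$, $\alpha$ a finite subset of the atomic diagram of a finite structure in the language of $K$, $\varphi$ an atomic sentence or negation of one in the language of $K'$, such that for every $\mathcal{A}\in K$, $\{\varphi:(\exists\alpha\subseteq D(\mathcal{A}))(\alpha,\varphi)\in\Phi\}=D(\mathcal{B})$ for some $\mathcal{B}\in K'$. A computable embedding is a computable transformation with $\mathcal{A}\cong\mathcal{A}'\iff\Phi(\mathcal{A})\cong\Phi(\mathcal{A}')$; $K\le_c K'$ means one exists; $K\perp K'$ means $K\not\le_c K'$ and $K'\not\le_c K$. $PF$ is the class of finite prime fields (in a relational language); $FLO$ is the class of finite linear orders. *)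

(* Defs.v *)
From mathcomp Require Import all_boot.
Set Implicit Arguments. Unset Strict Implicit. Unset Printing Implicit Defensive.

Inductive instr := INC (r j : nat) | DEC (r j k : nat).

Definition step (M : seq instr) (c : nat * (nat -> nat)) : nat * (nat -> nat) :=
  let: (pc, R) := c in
  if pc < size M then
    match nth (INC 0 0) M pc with
    | INC r j => (j, fun x => if x == r then (R x).+1 else R x)
    | DEC r j k => if R r == 0 then (k, R)
                   else (j, fun x => if x == r then (R x).-1 else R x)
    end
  else c.

Definition halts (M : seq instr) (x : nat) : Prop :=
  exists n, size M <= (iter n (step M) (0, fun r => if r == 0 then x else 0)).1.

Definition ce_nat (P : nat -> Prop) : Prop :=
  exists M, forall x, P x <-> halts M x.

(* A language is the list of arities of its relation symbols R_0, ..., R_{k-1}. *)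
Definition lang := seq nat.

Record struc (L : lang) := MkStruc {
  univ : nat -> Prop;
  rel : nat -> seq nat -> Prop;
  univ_nonempty : exists x, univ x;
  rel_wf : forall i t, rel i t ->
    i < size L /\ size t = nth 0 L i /\ (forall x, x \in t -> univ x) }.

Definition finite_struc L (A : struc L) : Prop :=
  exists s : seq nat, forall x, univ A x <-> x \in s.

Definition iso L (A B : struc L) : Prop :=
  exists f : nat -> nat,
    (forall x, univ A x -> univ B (f x)) /\
    (forall x y, univ A x -> univ A y -> f x = f y -> x = y) /\
    (forall y, univ B y -> exists x, univ A x /\ f x = y) /\
    (forall i t, (forall x, x \in t -> univ A x) ->
       (rel A i t <-> rel B i (map f t))).

(* Atomic sentences (with constants from omega):
   (0, [:: a; b])  is  a = b ;   (i.+1, t)  is  R_i(t). *)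
Definition sentence := (nat * seq nat)%type.
Definition sentence_wf (L : lang) (s : sentence) : bool :=
  match s with
  | (0, t) => size t == 2
  | (i.+1, t) => (i < size L) && (size t == nth 0 L i)
  end.

Definition holds L (A : struc L) (s : sentence) : Prop :=
  match s with
  | (0, t) => nth 0 t 0 = nth 0 t 1
  | (i.+1, t) => rel A i t
  end.

(* Literals: (true, s) is s, (false, s) is the negation of s. *)
Definition literal := (bool * sentence)%type.

Definition diag L (A : struc L) (l : literal) : Prop :=
  sentence_wf L l.2 /\ (forall x, x \in l.2.2 -> univ A x) /\
  (holds A l.2 <-> l.1 = true).

Record cls := MkCls { clang : lang; cmem : struc clang -> Prop }.
Arguments cmem : clear implicits.

Definition iso_closed (K : cls) : Prop :=
  forall A B : struc (clang K), cmem K A -> iso A B -> cmem K B.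

Definition pairT := (seq literal * literal)%type.

Definition image L (Phi : pairT -> Prop) (A : struc L) (l : literal) : Prop :=
  exists alpha, Phi (alpha, l) /\ forall a, a \in alpha -> diag A a.

Definition comp_transf (K K' : cls) (Phi : pairT -> Prop) : Prop :=
  (exists M, forall p, Phi p <-> halts M (pickle p)) /\
  (forall p, Phi p ->
     (exists C : struc (clang K), finite_struc C /\
        forall a, a \in p.1 -> diag C a) /\
     sentence_wf (clang K') p.2.2) /\
  (forall A, cmem K A -> exists B, cmem K' B /\
     forall l, image Phi A l <-> diag B l).

Definition comp_emb (K K' : cls) (Phi : pairT -> Prop) : Prop :=
  comp_transf K K' Phi /\
  forall (A A' : struc (clang K)) (B B' : struc (clang K')),
    cmem K A -> cmem K A' ->
    (forall l, image Phi A l <-> diag B l) ->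
    (forall l, image Phi A' l <-> diag B' l) ->
    (iso A A' <-> iso B B').

Definition le_c (K K' : cls) : Prop := exists Phi, comp_emb K K' Phi.
Definition incomp (K K' : cls) : Prop := ~ le_c K K' /\ ~ le_c K' K.

Definition FLO : cls := MkCls (fun A : struc [:: 2] =>
  finite_struc A /\
  (forall x, univ A x -> ~ rel A 0 [:: x; x]) /\
  (forall x y z, rel A 0 [:: x; y] -> rel A 0 [:: y; z] -> rel A 0 [:: x; z]) /\
  (forall x y, univ A x -> univ A y -> x <> y ->
     rel A 0 [:: x; y] \/ rel A 0 [:: y; x])).

(* finite prime fields, language: graphs of + (R_0) and * (R_1), ternary;
   A is in PF iff A is isomorphic to Z/pZ for some prime p *)
Definition PF : cls := MkCls (fun A : struc [:: 3; 3] =>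
  exists p, prime p /\ exists f : nat -> nat,
    (forall x, univ A x -> f x < p) /\
    (forall x y, univ A x -> univ A y -> f x = f y -> x = y) /\
    (forall n, n < p -> exists x, univ A x /\ f x = n) /\
    (forall a b c, univ A a -> univ A b -> univ A c ->
       (rel A 0 [:: a; b; c] <-> (f a + f b) %% p = f c) /\
       (rel A 1 [:: a; b; c] <-> (f a * f b) %% p = f c))).

(* Main.v *)
Require Import Defs.
From mathcomp Require Import all_boot.
From Stdlib Require Import ClassicalEpsilon Classical FunctionalExtensionality.
Require Import Defs.
Set Implicit Arguments. Unset Strict Implicit. Unset Printing Implicit Defensive.

Definition reach (M : seq instr) (c c' : nat * (nat -> nat)) :=
  exists n, iter n (step M) c = c'.

Lemma reach_refl M c : reach M c c.
Proof. by exists 0. Qed.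

Lemma reach_trans M c1 c2 c3 : reach M c1 c2 -> reach M c2 c3 -> reach M c1 c3.
Proof. by move=> [n1 <-] [n2 <-]; exists (n2 + n1); rewrite iterD. Qed.

Lemma reach_st M c c1 c2 : step M c = c1 -> reach M c1 c2 -> reach M c c2.
Proof. by move=> H [n <-]; exists n.+1; rewrite iterSr H. Qed.

Definition I0 := INC 0 0.

Lemma st_inc M pc r j R : pc < size M -> nth I0 M pc = INC r j ->
  step M (pc, R) = (j, fun x => if x == r then (R x).+1 else R x).
Proof. by move=> H1 H2; rewrite /step H1 H2. Qed.

Lemma st_dec0 M pc r j k R : pc < size M -> nth I0 M pc = DEC r j k ->
  R r = 0 -> step M (pc, R) = (k, R).
Proof. by move=> H1 H2 H3; rewrite /step H1 H2 H3. Qed.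

Lemma st_decS M pc r j k R n : pc < size M -> nth I0 M pc = DEC r j k ->
  R r = n.+1 -> step M (pc, R) = (j, fun x => if x == r then (R x).-1 else R x).
Proof. by move=> H1 H2 H3; rewrite /step H1 H2 H3. Qed.

Definition frame (R R' : nat -> nat) (rs : seq nat) :=
  forall x, x \notin rs -> R' x = R x.

Definition split_at M o s h c q q2 E :=
  nth I0 M o = DEC s (o+1) (o+3) /\ nth I0 M (o+1) = DEC s (o+2) (o+5) /\
      nth I0 M (o+2) = INC h o /\ nth I0 M (o+3) = INC c (o+4) /\
      nth I0 M (o+4) = DEC h (o+7) o /\ nth I0 M (o+5) = DEC h (o+6) E /\
      nth I0 M (o+6) = INC q (o+8) /\ nth I0 M (o+7) = INC s (o+4) /\
      nth I0 M (o+8) = INC q2 (o+5) /\ o + 8 < size M.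

Lemma halve M o s h c q q2 E : split_at M o s h c q q2 E -> s != h ->
  forall d b R, R s = d.*2 + b -> b <= 1 ->
  exists R', reach M (o, R) (if b == 1 then o+5 else o+3, R') /\
     R' s = 0 /\ R' h = R h + d /\ frame R R' [:: s; h].
Proof.
move=> [I0' [I1 [I2 [I3 [I4 [I5 [I6 [I7 [I8 Hs]]]]]]]]] Hsh.
have Hsz : forall i, i <= 8 -> o + i < size M.
  by move=> i Hi; apply: leq_ltn_trans Hs; rewrite leq_add2l.
have S0 : o < size M by rewrite -[o]addn0; apply: Hsz.
have S1 := Hsz 1 isT. have S2 := Hsz 2 isT.
elim=> [|d IH] b R HR Hb.
- case: b HR Hb => [|[|//]] HR _ /=.
  + exists R; split; last by split => //; rewrite addn0.
    apply: reach_st (reach_refl _ _).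
    by apply: st_dec0; [exact: S0 | exact: I0' | rewrite HR].
  + eexists; split.
      apply: reach_st; first by apply: st_decS; [exact: S0 | exact: I0' | rewrite HR].
      apply: reach_st; first by apply: st_dec0; [exact: S1 | exact: I1 | rewrite /= eqxx HR].
      exact: reach_refl.
    rewrite /= eqxx HR; split => //; split; first by rewrite eq_sym (negbTE Hsh) addn0.
    move=> x; rewrite !inE negb_or => /andP[/negbTE -> _] //.
- have HR' : R s = (d.*2 + b).+2 by rewrite HR doubleS.
  set R1 := fun x => if x == s then (R x).-1 else R x.
  set R2 := fun x => if x == s then (R1 x).-1 else R1 x.
  set R3 := fun x => if x == h then (R2 x).+1 else R2 x.
  have H3s : R3 s = d.*2 + b.
    by rewrite /R3 /R2 /R1 (negbTE Hsh) !eqxx HR'.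
  have [R' [Hr [Hs' [Hh' Hf]]]] := IH b R3 H3s Hb.
  exists R'; split.
    apply: reach_st; first by apply: st_decS; [exact: S0 | exact: I0' | rewrite HR'].
    apply: reach_st; first by apply: st_decS; [exact: S1 | exact: I1 | rewrite /= eqxx HR'].
    apply: reach_st; first by apply: st_inc; [exact: S2 | exact: I2].
    exact: Hr.
  split => //; split.
    by rewrite Hh' /R3 /R2 /R1 eqxx eq_sym (negbTE Hsh) addSnnS addnC.
  move=> x Hx; rewrite Hf //.
  move: Hx; rewrite !inE negb_or => /andP[/negbTE Hx1 /negbTE Hx2].
  by rewrite /R3 /R2 /R1 Hx1 Hx2.
Qed.

Ltac fr_simpl := repeat match goal with
  | H : is_true (?x \notin _) |- _ => rewrite !inE !negb_or in H; move: H => /and3P[] || move: H => /andP[] end.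

Lemma notin2 (x a b : nat) : x \notin [:: a; b] -> x != a /\ x != b.
Proof. by rewrite !inE negb_or => /andP. Qed.
Lemma notin3 (x a b c : nat) : x \notin [:: a; b; c] -> [/\ x != a, x != b & x != c].
Proof. by rewrite !inE !negb_or => /and3P. Qed.
Lemma notin4 (x a b c d : nat) : x \notin [:: a; b; c; d] -> [/\ x != a, x != b, x != c & x != d].
Proof. by rewrite !inE !negb_or => /and4P. Qed.

Lemma move1 M o s h c q q2 E : split_at M o s h c q q2 E -> s != h ->
  forall d R, R h = d ->
  exists R', reach M (o+4, R) (o, R') /\
     R' h = 0 /\ R' s = R s + d /\ frame R R' [:: s; h].
Proof.
move=> [I0' [I1 [I2 [I3 [I4 [I5 [I6 [I7 [I8 Hs]]]]]]]]] Hsh.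
have Hsz : forall i, i <= 8 -> o + i < size M.
  by move=> i Hi; apply: leq_ltn_trans Hs; rewrite leq_add2l.
have S4 := Hsz 4 isT. have S7 := Hsz 7 isT.
elim=> [|d IH] R HR.
- exists R; split; last by rewrite addn0.
  apply: reach_st (reach_refl _ _).
  by apply: st_dec0; [exact: S4 | exact: I4 | rewrite HR].
- set R1 := fun x => if x == h then (R x).-1 else R x.
  set R2 := fun x => if x == s then (R1 x).+1 else R1 x.
  have H2 : R2 h = d by rewrite /R2 /R1 eq_sym (negbTE Hsh) eqxx HR.
  have [R' [Hr [Hh' [Hs' Hf]]]] := IH R2 H2.
  exists R'; split.
    apply: reach_st; first by apply: st_decS; [exact: S4 | exact: I4 | rewrite HR].
    apply: reach_st; first by apply: st_inc; [exact: S7 | exact: I7].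
    exact: Hr.
  split => //; split.
    by rewrite Hs' /R2 /R1 eqxx (negbTE Hsh) addSnnS.
  move=> x Hx; rewrite Hf //; have [/negbTE X1 /negbTE X2] := notin2 Hx.
  by rewrite /R2 /R1 X1 X2.
Qed.

Lemma move2 M o s h c q q2 E : split_at M o s h c q q2 E ->
  h != q -> h != q2 -> q != q2 ->
  forall d R, R h = d ->
  exists R', reach M (o+5, R) (E, R') /\
     R' h = 0 /\ R' q = R q + d /\ R' q2 = R q2 + d /\ frame R R' [:: h; q; q2].
Proof.
move=> [I0' [I1 [I2 [I3 [I4 [I5 [I6 [I7 [I8 Hs]]]]]]]]] Hhq Hhq2 Hqq2.
have Hsz : forall i, i <= 8 -> o + i < size M.
  by move=> i Hi; apply: leq_ltn_trans Hs; rewrite leq_add2l.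
have S5 := Hsz 5 isT. have S6 := Hsz 6 isT. have S8 := Hsz 8 isT.
elim=> [|d IH] R HR.
- exists R; split; last by rewrite !addn0.
  apply: reach_st (reach_refl _ _).
  by apply: st_dec0; [exact: S5 | exact: I5 | rewrite HR].
- set R1 := fun x => if x == h then (R x).-1 else R x.
  set R2 := fun x => if x == q then (R1 x).+1 else R1 x.
  set R3 := fun x => if x == q2 then (R2 x).+1 else R2 x.
  have H3 : R3 h = d by rewrite /R3 /R2 /R1 (negbTE Hhq) (negbTE Hhq2) eqxx HR.
  have [R' [Hr [Hh' [Hq' [Hq2' Hf]]]]] := IH R3 H3.
  exists R'; split.
    apply: reach_st; first by apply: st_decS; [exact: S5 | exact: I5 | rewrite HR].
    apply: reach_st; first by apply: st_inc; [exact: S6 | exact: I6].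
    apply: reach_st; first by apply: st_inc; [exact: S8 | exact: I8].
    exact: Hr.
  split => //; split.
    by rewrite Hq' /R3 /R2 /R1 (negbTE Hqq2) eqxx eq_sym (negbTE Hhq) addSnnS.
  split.
    by rewrite Hq2' /R3 /R2 /R1 eqxx eq_sym (negbTE Hqq2) eq_sym (negbTE Hhq2) addSnnS.
  move=> x Hx; rewrite Hf //; have [/negbTE X1 /negbTE X2 /negbTE X3] := notin3 Hx.
  by rewrite /R3 /R2 /R1 X1 X2 X3.
Qed.

Ltac nin := rewrite /= ?inE ?negb_or; repeat (apply/andP; split);
  (assumption || (rewrite eq_sym; assumption)).

Lemma split_ok M o s h c q q2 E : split_at M o s h c q q2 E ->
  uniq [:: s; h; c; q; q2] ->
  forall a y R, R s = 2 ^ a * y.*2.+1 -> R h = 0 ->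
  exists R', reach M (o, R) (E, R') /\ R' s = 0 /\ R' h = 0 /\
     R' c = R c + a /\ R' q = R q + y /\ R' q2 = R q2 + y /\
     frame R R' [:: s; c; q; q2].
Proof.
move=> Hsp Hu.
move: Hu; rewrite /= !inE !negb_or -!andbA.
move=> /and5P[Hsh Hsc Hsq Hsq2] /and5P[Hhc Hhq Hhq2 Hcq] /and3P[Hcq2 Hqq2 _].
have Hsp' := Hsp.
move: Hsp' => [I0' [I1 [I2 [I3 [I4 [I5 [I6 [I7 [I8 Hs]]]]]]]]].
have S3 : o + 3 < size M by apply: leq_ltn_trans Hs; rewrite leq_add2l.
elim=> [|a IH] y R HR Hh0.
- have E1 : R s = y.*2 + 1 by rewrite HR expn0 mul1n addn1.
  have [R1 [Hr1 [H1s [H1h H1f]]]] := halve Hsp Hsh E1 isT.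
  have E2 : R1 h = y by rewrite H1h Hh0.
  have [R2 [Hr2 [H2h [H2q [H2q2 H2f]]]]] := move2 Hsp Hhq Hhq2 Hqq2 E2.
  exists R2; split; first exact: reach_trans Hr1 Hr2.
  split; first by rewrite (H2f s); [exact: H1s | nin].
  split => //.
  split; first by rewrite (H2f c) ?addn0; [rewrite (H1f c) //; nin | nin].
  split; first by rewrite H2q (H1f q) //; nin.
  split; first by rewrite H2q2 (H1f q2) //; nin.
  move=> x /notin4 [X1 X2 X3 X4].
  case: (eqVneq x h) => [->|Xh]; first by rewrite H2h Hh0.
  by rewrite (H2f x); [rewrite (H1f x) //; nin | nin].
- set m := 2 ^ a * y.*2.+1.
  have Hm : R s = m.*2 + 0 by rewrite HR expnS -mulnA mul2n addn0.
  have [R1 [Hr1 [H1s [H1h H1f]]]] := halve Hsp Hsh Hm isT.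
  set R2 := fun x => if x == c then (R1 x).+1 else R1 x.
  have E3 : R2 h = m by rewrite /R2 (negbTE Hhc) H1h Hh0.
  have [R3 [Hr3 [H3h [H3s H3f]]]] := move1 Hsp Hsh E3.
  have H3s' : R3 s = 2 ^ a * y.*2.+1 by rewrite H3s /R2 (negbTE Hsc) H1s.
  have [R4 [Hr4 [H4s [H4h [H4c [H4q [H4q2 H4f]]]]]]] := IH y R3 H3s' H3h.
  exists R4; split.
    apply: reach_trans Hr1 _; apply: reach_st.
      by apply: st_inc; [exact: S3 | exact: I3].
    exact: reach_trans Hr3 Hr4.
  split => //; split => //; split.
    rewrite H4c (H3f c); last nin.
    rewrite /R2 eqxx (H1f c); last nin.
    by rewrite addSnnS addnC.
  split.
    rewrite H4q (H3f q); last nin.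
    rewrite /R2 eq_sym (negbTE Hcq) (H1f q) //; nin.
  split.
    rewrite H4q2 (H3f q2); last nin.
    rewrite /R2 eq_sym (negbTE Hcq2) (H1f q2) //; nin.
  move=> x /notin4 [X1 X2 X3 X4].
  case: (eqVneq x h) => [->|Xh]; first by rewrite H4h Hh0.
  rewrite (H4f x); last nin.
  rewrite (H3f x); last nin.
  by rewrite /R2 (negbTE X2) (H1f x) //; nin.
Qed.

Definition eq_at M o a b N S :=
  nth I0 M o = DEC a (o+1) (o+2) /\ nth I0 M (o+1) = DEC b o N /\
  nth I0 M (o+2) = DEC b N S /\ o + 2 < size M.

Lemma eq_ok M o a b N S : eq_at M o a b N S -> a != b ->
  forall R, (R a = R b -> exists R', reach M (o, R) (S, R') /\ frame R R' [:: a; b]) /\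
            (R a <> R b -> exists R', reach M (o, R) (N, R') /\ frame R R' [:: a; b]).
Proof.
move=> [I0' [I1 [I2 Hs]]] Hab.
have S0 : o < size M by apply: leq_ltn_trans Hs; apply: leq_addr.
have S1 : o + 1 < size M by apply: leq_ltn_trans Hs; rewrite leq_add2l.
have S2 := Hs.
move=> R; move Ha : (R a) => n; elim: n R Ha => [|n IH] R Ha.
- split.
  + move=> Hb; exists R; split => //.
    apply: reach_st; first by apply: st_dec0; [exact: S0 | exact: I0' | exact: Ha].
    apply: reach_st; first by apply: st_dec0; [exact: S2 | exact: I2 | rewrite -Hb].
    exact: reach_refl.
  + move=> Hb; case Eb: (R b) => [|m]; first by rewrite Eb in Hb.
    eexists; split.
      apply: reach_st; first by apply: st_dec0; [exact: S0 | exact: I0' | exact: Ha].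
      apply: reach_st; first by apply: st_decS; [exact: S2 | exact: I2 | exact: Eb].
      exact: reach_refl.
    move=> x Hx; have [/negbTE X1 /negbTE X2] := notin2 Hx.
    by rewrite /= X2.
- set R1 := fun x => if x == a then (R x).-1 else R x.
  have H1a : R1 a = n by rewrite /R1 eqxx Ha.
  have F1 : frame R R1 [:: a; b].
    move=> x Hx; have [/negbTE X1 /negbTE X2] := notin2 Hx.
    by rewrite /R1 X1.
  case Eb: (R b) => [|m].
    split => // _; eexists; split; last exact: F1.
    apply: reach_st; first by apply: st_decS; [exact: S0 | exact: I0' | exact: Ha].
    apply: reach_st; first by apply: st_dec0; [exact: S1 | exact: I1 | rewrite /R1 eq_sym (negbTE Hab)].
    exact: reach_refl.
  set R2 := fun x => if x == b then (R1 x).-1 else R1 x.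
  have H2a : R2 a = n by rewrite /R2 (negbTE Hab) H1a.
  have H2b : R2 b = m by rewrite /R2 eqxx /R1 eq_sym (negbTE Hab) Eb.
  have F2 : frame R R2 [:: a; b].
    move=> x Hx; have [/negbTE X1 /negbTE X2] := notin2 Hx.
    by rewrite /R2 /R1 X1 X2.
  have Hr : reach M (o, R) (o, R2).
    apply: reach_st; first by apply: st_decS; [exact: S0 | exact: I0' | exact: Ha].
    apply: reach_st; first by apply: st_decS; [exact: S1 | exact: I1 | rewrite /R1 eq_sym (negbTE Hab) Eb].
    exact: reach_refl.
  have [IH1 IH2] := IH R2 H2a.
  split.
  + move=> [Hnm]; have E4 : n = R2 b by rewrite H2b.
    have [R' [Hr' Hf]] := IH1 E4.
    exists R'; split; first exact: reach_trans Hr Hr'.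
    by move=> x Hx; rewrite Hf // F2.
  + move=> Hnm; have E4 : n <> R2 b by rewrite H2b => E; apply: Hnm; rewrite E.
    have [R' [Hr' Hf]] := IH2 E4.
    exists R'; split; first exact: reach_trans Hr Hr'.
    by move=> x Hx; rewrite Hf // F2.
Qed.

Definition zt_at M o r Z NZ :=
  nth I0 M o = DEC r (o+1) Z /\ nth I0 M (o+1) = INC r NZ /\ o + 1 < size M.

Lemma zt_ok M o r Z NZ : zt_at M o r Z NZ -> forall R,
  (R r = 0 -> reach M (o, R) (Z, R)) /\
  (0 < R r -> exists R', reach M (o, R) (NZ, R') /\ frame R R' [::]).
Proof.
move=> [I0' [I1 Hs]] R.
have S0 : o < size M by apply: leq_ltn_trans Hs; apply: leq_addr.
split.
- move=> H; apply: reach_st; first by apply: st_dec0; [exact: S0 | exact: I0' | exact: H].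
  exact: reach_refl.
- case E: (R r) => [|n] // _; eexists; split.
    apply: reach_st; first by apply: st_decS; [exact: S0 | exact: I0' | exact: E].
    apply: reach_st; first by apply: st_inc; [exact: Hs | exact: I1].
    exact: reach_refl.
  move=> x _ /=; case: (eqVneq x r) => [->|] //.
  by rewrite E.
Qed.

Definition init (x : nat) := (0, fun r : nat => if r == 0 then x else 0).

Lemma halted_fix M c : size M <= c.1 -> forall n, iter n (step M) c = c.
Proof.
case: c => pc R /= H; elim=> //= n ->; rewrite /step.
by rewrite ltnNge H.
Qed.

Lemma reach_halts M x c : reach M (init x) c -> size M <= c.1 -> halts M x.
Proof. by move=> [n <-] H; exists n. Qed.

Lemma trap_nohalt M x pc R r : reach M (init x) (pc, R) -> pc < size M ->
  nth I0 M pc = INC r pc -> ~ halts M x.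
Proof.
move=> [N HN] Hpc Hi [n Hn].
have Hstay : forall k R', (iter k (step M) (pc, R')).1 = pc.
  elim=> // k IH R'; rewrite iterS.
  case E: (iter k (step M) (pc, R')) => [pc' R''].
  have H1 := IH R'; rewrite E /= in H1; rewrite H1.
  by rewrite (st_inc _ Hpc Hi).
case: (leqP n N) => Hle.
- have := halted_fix Hn (N - n); rewrite -iterD subnK // HN => E.
  by move: Hn; rewrite -E /= leqNgt Hpc.
- move: Hn; rewrite -(subnK (ltnW Hle)) iterD HN Hstay leqNgt Hpc.
  by [].
Qed.


Definition spl o s c q q2 E :=
  [:: DEC s (o+1) (o+3); DEC s (o+2) (o+5); INC 9 o; INC c (o+4);
      DEC 9 (o+7) o; DEC 9 (o+6) E; INC q (o+8); INC s (o+4); INC q2 (o+5)].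

Definition Mid : seq instr :=
  spl 0 0 1 2 3 9 ++
  [:: DEC 1 10 11; DEC 2 9 87; DEC 2 87 12] ++
  spl 12 3 4 17 19 21 ++
  spl 21 4 6 7 19 30 ++
  spl 30 7 8 17 19 39 ++
  spl 39 8 10 11 19 48 ++
  spl 48 11 12 17 19 57 ++
  [:: DEC 12 58 87; INC 12 59] ++
  spl 59 12 13 14 19 68 ++
  [:: DEC 14 69 87; INC 14 70] ++
  spl 70 14 15 16 19 79 ++
  [:: DEC 16 87 80; DEC 10 81 82; DEC 10 87 88;
      DEC 13 83 84; DEC 15 82 86; DEC 15 86 85;
      DEC 6 88 87; DEC 6 87 88; INC 18 87].

Lemma size_Mid : size Mid = 88. Proof. by []. Qed.

Lemma B0 : split_at Mid 0 0 9 1 2 3 9. Proof. by do !split. Qed.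
Lemma B1 : eq_at Mid 9 1 2 87 12. Proof. by do !split. Qed.
Lemma B2 : split_at Mid 12 3 9 4 17 19 21. Proof. by do !split. Qed.
Lemma B3 : split_at Mid 21 4 9 6 7 19 30. Proof. by do !split. Qed.
Lemma B4 : split_at Mid 30 7 9 8 17 19 39. Proof. by do !split. Qed.
Lemma B5 : split_at Mid 39 8 9 10 11 19 48. Proof. by do !split. Qed.
Lemma B6 : split_at Mid 48 11 9 12 17 19 57. Proof. by do !split. Qed.
Lemma B7 : zt_at Mid 57 12 87 59. Proof. by do !split. Qed.
Lemma B8 : split_at Mid 59 12 9 13 14 19 68. Proof. by do !split. Qed.
Lemma B9 : zt_at Mid 68 14 87 70. Proof. by do !split. Qed.
Lemma B10 : split_at Mid 70 14 9 15 16 19 79. Proof. by do !split. Qed.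
Lemma B11 : eq_at Mid 82 13 15 86 85. Proof. by do !split. Qed.

Definition valid (l : literal) : bool :=
  let: (b, (j, t)) := l in
  ((j == 1) && (size t == 2)) ||
  ((j == 0) && (if t is [:: x; y] then b == (x == y) else false)).

Definition PhiId (p : pairT) : Prop := p.1 = [:: p.2] /\ valid p.2.

Lemma fail87 x R : reach Mid (init x) (87, R) -> ~ halts Mid x.
Proof. by move=> H; apply: (trap_nohalt H). Qed.

Lemma code_pos x s : 0 < CodeSeq.code (x :: s).
Proof. by rewrite /= muln_gt0 expn_gt0. Qed.

Lemma fin_no x R P : reach Mid (init x) (87, R) -> ~ P -> (P <-> halts Mid x).
Proof. by move=> H HP; split => // /(fail87 H). Qed.

Lemma fin_yes x R P : reach Mid (init x) (88, R) -> P -> (P <-> halts Mid x).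
Proof. by move=> H HP; split => // _; apply: (reach_halts H). Qed.

Ltac frs := repeat match goal with
  | H : frame _ ?R' _ |- context[?R' ?x] => rewrite (H x); last by []
  end.

Lemma stD0 pc r j k R : pc < size Mid -> nth I0 Mid pc = DEC r j k -> R r = 0 ->
  reach Mid (pc, R) (k, R).
Proof. move=> H1 H2 H3; apply: reach_st (reach_refl _ _); exact: (st_dec0 H1 H2 H3). Qed.

Lemma stDS pc r j k R n : pc < size Mid -> nth I0 Mid pc = DEC r j k -> R r = n.+1 ->
  exists R', reach Mid (pc, R) (j, R') /\ R' r = n.
Proof.
move=> H1 H2 H3; eexists; split.
  apply: reach_st (reach_refl _ _); exact: (st_decS H1 H2 H3).
by rewrite /= eqxx H3.
Qed.

Lemma pickle1 (l : literal) : pickle [:: l] = 2 ^ pickle l * 0.*2.+1.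
Proof. by []. Qed.

Lemma Mid_spec p : PhiId p <-> halts Mid (pickle p).
Proof.
move: p => [alpha [b [j t]]].
set X := pickle _.
set A := pickle alpha. set W := pickle (b, (j, t)).
have EX : X = 2 ^ A * (2 ^ W * 0.*2.+1).*2.+1 by [].
have [R1 [Hr1 [H1s [H1h [H1c [H1q [H1q2 H1f]]]]]]] :=
  split_ok B0 isT (R := (init X).2) EX (erefl _).
rewrite /= !add0n in H1c H1q H1q2.
have [Heq Hneq] := eq_ok B1 isT R1.
case: (eqVneq A (2 ^ W * 0.*2.+1)) => HA; last first.
  have [R' [Hr' _]] := Hneq ltac:(by rewrite H1c H1q; apply/eqP).
  apply: (fin_no (reach_trans Hr1 Hr')).
  move=> [/= Ha _]; move: HA; rewrite /A Ha pickle1 /W eqxx //.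
have Ha : alpha = [:: (b, (j, t))].
  by apply: (pcan_inj (@pickleK _)); rewrite pickle1.
have [R2 [Hr2 H2f]] := Heq ltac:(by rewrite H1c H1q).
have E3 : R2 3 = 2 ^ W * 0.*2.+1 by frs.
have ZE3 : R2 9 = 0 by frs.
have [R3 [Hr3 [H3s [H3h [H3c [H3q [H3q2 H3f]]]]]]] :=
  split_ok B2 isT E3 ZE3.
set C := pickle (j, t).
have E4 : R3 4 = 2 ^ b * (2 ^ C * 0.*2.+1).*2.+1 by rewrite H3c; frs.
have ZE4 : R3 9 = 0 by frs.
have [R4 [Hr4 [H4s [H4h [H4c [H4q [H4q2 H4f]]]]]]] :=
  split_ok B3 isT E4 ZE4.
have E7 : R4 7 = 2 ^ C * 0.*2.+1 by rewrite H4q; frs.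
have ZE7 : R4 9 = 0 by frs.
have [R5 [Hr5 [H5s [H5h [H5c [H5q [H5q2 H5f]]]]]]] :=
  split_ok B4 isT E7 ZE7.
set T := pickle t.
have E8 : R5 8 = 2 ^ j * (2 ^ T * 0.*2.+1).*2.+1 by rewrite H5c; frs.
have ZE8 : R5 9 = 0 by frs.
have [R6 [Hr6 [H6s [H6h [H6c [H6q [H6q2 H6f]]]]]]] :=
  split_ok B5 isT E8 ZE8.
have E11 : R6 11 = 2 ^ T * 0.*2.+1 by rewrite H6q; frs.
have ZE11 : R6 9 = 0 by frs.
have [R7 [Hr7 [H7s [H7h [H7c [H7q [H7q2 H7f]]]]]]] :=
  split_ok B6 isT E11 ZE11.
have Hr17 : reach Mid (init X) (57, R7).
  apply: (reach_trans Hr1); apply: (reach_trans Hr2); apply: (reach_trans Hr3).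
  apply: (reach_trans Hr4); apply: (reach_trans Hr5); apply: (reach_trans Hr6).
  exact: Hr7.
have F6 : R7 6 = b by rewrite (H7f 6) // (H6f 6) // (H5f 6) // H4c; frs.
have F10 : R7 10 = j by rewrite (H7f 10) // H6c; frs.
have F12 : R7 12 = pickle t by rewrite H7c; frs.
have F13 : R7 13 = 0 by frs.
have F14 : R7 14 = 0 by frs.
have F15 : R7 15 = 0 by frs.
have F16 : R7 16 = 0 by frs.
have [Z7 NZ7] := zt_ok B7 R7.
suff : valid (b, (j, t)) <-> halts Mid X.
  by rewrite /PhiId /= Ha => -[H1 H2]; split => [[_ /H1]|/H2].
clearbody X.
clear -Hr17 F6 F10 F12 F13 F14 F15 F16 H7h Z7 NZ7.
case: t F12 => [|x t1] F12.
  by apply: (fin_no (reach_trans Hr17 (Z7 F12))); rewrite /= !andbF.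
have [R8 [Hr8 H8f]] := NZ7 ltac:(by rewrite F12 code_pos).
have E12 : R8 12 = 2 ^ x * (pickle t1).*2.+1 by rewrite (H8f 12) // F12.
have Z8 : R8 9 = 0 by frs; rewrite ?F6 ?F10 ?F13 ?F14 ?F15 ?F16 ?add0n; rewrite ?F6 ?F10 ?F13 ?F14 ?F15 ?F16 ?add0n.
have [R9 [Hr9 [H9s [H9h [H9c [H9q [H9q2 H9f]]]]]]] := split_ok B8 isT E12 Z8.
have Hr19 := reach_trans Hr17 (reach_trans Hr8 Hr9).
have [Z9 NZ9] := zt_ok B9 R9.
have F14' : R9 14 = pickle t1 by rewrite H9q; frs; rewrite ?F6 ?F10 ?F13 ?F14 ?F15 ?F16 ?add0n; rewrite ?F6 ?F10 ?F13 ?F14 ?F15 ?F16 ?add0n.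
case: t1 F12 E12 F14' H9q H9q2 => [|y t2] F12 E12 F14' _ _.
  by apply: (fin_no (reach_trans Hr19 (Z9 F14'))); rewrite /= !andbF.
have [R10 [Hr10 H10f]] := NZ9 ltac:(by rewrite F14' code_pos).
have E14 : R10 14 = 2 ^ y * (pickle t2).*2.+1 by rewrite (H10f 14) // F14'.
have Z10 : R10 9 = 0 by frs; rewrite ?F6 ?F10 ?F13 ?F14 ?F15 ?F16 ?add0n; rewrite ?F6 ?F10 ?F13 ?F14 ?F15 ?F16 ?add0n.
have [R11 [Hr11 [H11s [H11h [H11c [H11q [H11q2 H11f]]]]]]] := split_ok B10 isT E14 Z10.
have Hr111 := reach_trans Hr19 (reach_trans Hr10 Hr11).
have G16 : R11 16 = pickle t2 by rewrite H11q; frs; rewrite ?F6 ?F10 ?F13 ?F14 ?F15 ?F16 ?add0n; rewrite ?F6 ?F10 ?F13 ?F14 ?F15 ?F16 ?add0n.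
have G6 : R11 6 = b by frs; rewrite ?F6 ?F10 ?F13 ?F14 ?F15 ?F16 ?add0n; rewrite ?F6 ?F10 ?F13 ?F14 ?F15 ?F16 ?add0n.
have G10 : R11 10 = j by frs; rewrite ?F6 ?F10 ?F13 ?F14 ?F15 ?F16 ?add0n; rewrite ?F6 ?F10 ?F13 ?F14 ?F15 ?F16 ?add0n.
have G13 : R11 13 = x by frs; rewrite ?F6 ?F10 ?F13 ?F14 ?F15 ?F16 ?add0n; rewrite H9c; frs; rewrite ?F6 ?F10 ?F13 ?F14 ?F15 ?F16 ?add0n; rewrite ?F6 ?F10 ?F13 ?F14 ?F15 ?F16 ?add0n.
have G15 : R11 15 = y by rewrite H11c; frs; rewrite ?F6 ?F10 ?F13 ?F14 ?F15 ?F16 ?add0n; rewrite ?F6 ?F10 ?F13 ?F14 ?F15 ?F16 ?add0n.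
case: t2 F12 E12 F14' E14 G16 H11q H11q2 => [|z t3] F12 E12 F14' E14 G16 _ _; last first.
  have G16' : R11 16 = (pickle (z :: t3)).-1.+1 by rewrite prednK // code_pos.
  have [R' [Hr' _]] := stDS (pc := 79) isT (erefl _) G16'.
  by apply: (fin_no (reach_trans Hr111 Hr')); by case: j {G10 F10} => [|[|j]].
have Hr80 := reach_trans Hr111 (stD0 (pc := 79) isT (erefl _) G16).
case: j G10 F10 => [|[|j]] G10 _.
- have Hr82 := reach_trans Hr80 (stD0 (pc := 80) isT (erefl _) G10).
  have [Eq Neq] := eq_ok B11 isT R11.
  case: (eqVneq x y) => Hxy.
  + have [R12 [Hr12 H12f]] := Eq ltac:(by rewrite G13 G15 Hxy).
    have G6' : R12 6 = b by frs; rewrite ?F6 ?F10 ?F13 ?F14 ?F15 ?F16 ?add0n; rewrite ?F6 ?F10 ?F13 ?F14 ?F15 ?F16 ?add0n.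
    case: b G6 G6' F6 => G6 G6' _.
    * have [R' [Hr' _]] := stDS (pc := 85) isT (erefl _) G6'.
      apply: (fin_yes (reach_trans Hr82 (reach_trans Hr12 Hr'))).
      by rewrite /= Hxy eqxx.
    * apply: (fin_no (reach_trans Hr82 (reach_trans Hr12 (stD0 (pc := 85) isT (erefl _) G6')))).
      by rewrite /= Hxy eqxx.
  + have [R12 [Hr12 H12f]] := Neq ltac:(by rewrite G13 G15; apply/eqP).
    have G6' : R12 6 = b by frs.
    case: b G6 G6' F6 => G6 G6' _.
    * have [R' [Hr' _]] := stDS (pc := 86) isT (erefl _) G6'.
      apply: (fin_no (reach_trans Hr82 (reach_trans Hr12 Hr'))).
      by rewrite /= (negbTE Hxy).
    * apply: (fin_yes (reach_trans Hr82 (reach_trans Hr12 (stD0 (pc := 86) isT (erefl _) G6')))).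
      by rewrite /= (negbTE Hxy).
- have [R' [Hr' H']] := stDS (pc := 80) isT (erefl _) G10.
  apply: (fin_yes (reach_trans Hr80 (reach_trans Hr' (stD0 (pc := 81) isT (erefl _) H')))).
  by [].
- have [R' [Hr' H']] := stDS (pc := 80) isT (erefl _) G10.
  have [R'' [Hr'' _]] := stDS (pc := 81) isT (erefl _) H'.
  by apply: (fin_no (reach_trans Hr80 (reach_trans Hr' Hr''))).
Qed.

Lemma iso_refl L (A : struc L) : iso A A.
Proof.
exists id; split => //; split => //; split; first by move=> y Hy; exists y.
by move=> i t _; rewrite map_id.
Qed.

Lemma iso_trans L (A B C : struc L) : iso A B -> iso B C -> iso A C.
Proof.
move=> [f [f1 [f2 [f3 f4]]]] [g [g1 [g2 [g3 g4]]]].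
exists (g \o f); split; first by move=> x Hx; apply: g1; apply: f1.
split; first by move=> x y Hx Hy /= E; apply: f2 => //; apply: g2 => //; apply: f1.
split.
  move=> z Hz; have [y [Hy <-]] := g3 z Hz; have [x [Hx <-]] := f3 y Hy.
  by exists x.
move=> i t Ht; rewrite (f4 i t Ht) map_comp g4 //.
by move=> y /mapP [x Hx ->]; apply: f1; apply: Ht.
Qed.

Lemma iso_sym L (A B : struc L) : iso A B -> iso B A.
Proof.
move=> [f [f1 [f2 [f3 f4]]]].
pose g y := epsilon (inhabits 0) (fun x => univ A x /\ f x = y).
have gP : forall y, univ B y -> univ A (g y) /\ f (g y) = y.
  move=> y Hy; apply: (epsilon_spec (inhabits 0) (fun x => univ A x /\ f x = y)).
  exact: f3.
exists g; split; first by move=> y /gP [].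
split.
  move=> y y' Hy Hy' E; have [_ <-] := gP y Hy; have [_ <-] := gP y' Hy'.
  by rewrite E.
split.
  move=> x Hx; exists (f x); split; first exact: f1.
  have [H1 H2] := gP (f x) (f1 x Hx).
  by apply: f2.
move=> i t Ht.
have Ht' : forall x, x \in map g t -> univ A x.
  by move=> x /mapP [y Hy ->]; have [] := gP y (Ht y Hy).
rewrite (f4 i _ Ht') -map_comp.
have -> : map (f \o g) t = t.
  rewrite -[RHS]map_id; apply/eq_in_map => y Hy /=.
  by have [] := gP y (Ht y Hy).
by [].
Qed.

Lemma univ_diag L (A : struc L) x : univ A x <-> diag A (true, (0, [:: x; x])).
Proof.
split.
  move=> Hx; split => //; split => //.
  by move=> y; rewrite !inE => /orP [] /eqP ->.
by move=> [_ [H _]]; apply: H; rewrite inE eqxx.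
Qed.

Lemma rel_diag L (A : struc L) i t : rel A i t <-> diag A (true, (i.+1, t)).
Proof.
split.
  move=> H; have [Hi [Hs Hu]] := rel_wf H.
  split; first by rewrite /= Hi Hs eqxx.
  by split.
by move=> [_ [_ H]]; apply/H.
Qed.

Lemma diag_iso L (A B : struc L) : (forall l, diag A l <-> diag B l) -> iso A B.
Proof.
move=> H.
exists id; split; first by move=> x /univ_diag /H /univ_diag.
split => //.
split; first by move=> y /univ_diag /H /univ_diag Hy; exists y.
by move=> i t _; rewrite map_id !rel_diag H.
Qed.

Lemma inj_card (f : nat -> nat) a b : (forall x, x < a -> f x < b) ->
  (forall x y, x < a -> y < a -> f x = f y -> x = y) -> a <= b.
Proof.
move=> H1 H2.
have U : uniq (map f (iota 0 a)).
  rewrite map_inj_in_uniq ?iota_uniq // => x y; rewrite !mem_iota !add0n.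
  by move=> /andP[_ Hx] /andP[_ Hy]; apply: H2.
have := uniq_leq_size (s2 := iota 0 b) U; rewrite size_map !size_iota; apply.
move=> y /mapP [x]; rewrite !mem_iota !add0n => /andP[_ Hx] ->.
by rewrite leq0n /= H1.
Qed.

Lemma iso_le L (A B : struc L) a b : (forall x, univ A x <-> x < a) ->
  (forall x, univ B x <-> x < b) -> iso A B -> a <= b.
Proof.
move=> HA HB [f [f1 [f2 _]]].
apply: (inj_card (f := f)).
  by move=> x /HA Hx; apply/HB; apply: f1.
by move=> x y /HA Hx /HA Hy; apply: f2.
Qed.

Lemma iso_card L (A B : struc L) a b : (forall x, univ A x <-> x < a) ->
  (forall x, univ B x <-> x < b) -> iso A B -> a = b.
Proof.
move=> HA HB H; apply/eqP; rewrite eqn_leq.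
by rewrite (iso_le HA HB H) (iso_le HB HA (iso_sym H)).
Qed.

Definition lo_rel (n : nat) (i : nat) (t : seq nat) : Prop :=
  i = 0 /\ exists x y, t = [:: x; y] /\ x < y /\ y <= n.

Lemma lo_ne n : exists x, x <= n. Proof. by exists 0. Qed.

Lemma lo_wf n : forall i t, lo_rel n i t ->
  i < size [:: 2] /\ size t = nth 0 [:: 2] i /\ (forall x, x \in t -> x <= n).
Proof.
move=> i t [-> [x [y [-> [Hxy Hy]]]]]; split => //; split => //.
move=> z; rewrite !inE => /orP [] /eqP -> //.
by apply: leq_trans Hy; apply: ltnW.
Qed.

Definition lo (n : nat) : struc [:: 2] :=
  @MkStruc [:: 2] (fun x => x <= n) (lo_rel n) (lo_ne n) (@lo_wf n).

Lemma lo_iso n m : iso (lo n) (lo m) -> n = m.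
Proof.
move=> H; have := iso_card (a := n.+1) (b := m.+1) _ _ H.
by move=> /(_ (fun x => iff_refl _) (fun x => iff_refl _)) [].
Qed.

Lemma lo_FLO n B : iso (lo n) B -> cmem FLO B.
Proof.
move=> [f [f1 [f2 [f3 f4]]]].
have pre : forall y, univ B y -> exists x, x <= n /\ f x = y.
  by move=> y /f3 [x [Hx <-]]; exists x.
have R2 : forall x y, x <= n -> y <= n -> (rel B 0 [:: f x; f y] <-> x < y).
  move=> x y Hx Hy.
  have Hu : forall z, z \in [:: x; y] -> univ (lo n) z.
    by move=> z; rewrite !inE => /orP [] /eqP ->.
  rewrite -[[:: f x; f y]]/(map f [:: x; y]) -f4 //=.
  split; first by move=> [_ [x' [y' [[-> ->] [H _]]]]].
  by move=> H; split => //; exists x, y.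
have wf2 : forall y z, rel B 0 [:: y; z] -> univ B y /\ univ B z.
  move=> y z /rel_wf [_ [_ Hu]]; split; apply: Hu; by rewrite !inE eqxx ?orbT.
split.
  exists (map f (iota 0 n.+1)) => y; split.
    by move=> /pre [x [Hx <-]]; apply: map_f; rewrite mem_iota add0n ltnS Hx.
  by move=> /mapP [x]; rewrite mem_iota add0n ltnS => /andP[_ Hx] ->; apply: f1.
split.
  by move=> y /pre [x [Hx <-]] /(R2 x x Hx Hx); rewrite ltnn.
split.
  move=> y z w H1 H2.
  have [/pre [x [Hx Ex]] /pre [x' [Hx' Ex']]] := wf2 _ _ H1.
  have [_ /pre [x'' [Hx'' Ex'']]] := wf2 _ _ H2.
  move: H1 H2; rewrite -Ex -Ex' -Ex'' !R2 // => H1 H2.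
  exact: ltn_trans H1 H2.
move=> y z /pre [x [Hx <-]] /pre [x' [Hx' <-]] Hne.
rewrite !R2 //; case: (ltngtP x x') => E; [by left | by right | by rewrite E in Hne].
Qed.

Lemma diag_lo_mono a b l : a <= b -> diag (lo a) l -> diag (lo b) l.
Proof.
move=> Hab [Hw [Hu Hh]]; split => //; split.
  by move=> x /Hu /= Hx; apply: leq_trans Hx Hab.
case: l Hw Hu Hh => bb [[|i] t] Hw Hu Hh //=.
rewrite -Hh /= /lo_rel.
split; move=> [Hi [x [y [Et [Hxy Hy]]]]]; split => //; exists x, y; split => //; split => //.
  by apply: Hu; rewrite Et !inE eqxx orbT.
by apply: leq_trans Hy Hab.
Qed.

Definition fld_rel (p : nat) (i : nat) (t : seq nat) : Prop :=
  exists a b c, t = [:: a; b; c] /\ a <= p.-1 /\ b <= p.-1 /\ c <= p.-1 /\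
   ((i = 0 /\ (a + b) %% p = c) \/ (i = 1 /\ (a * b) %% p = c)).

Lemma fld_ne p : exists x, x <= p.-1. Proof. by exists 0. Qed.

Lemma fld_wf p : forall i t, fld_rel p i t ->
  i < size [:: 3; 3] /\ size t = nth 0 [:: 3; 3] i /\ (forall x, x \in t -> x <= p.-1).
Proof.
move=> i t [a [b [c [-> [Ha [Hb [Hc H]]]]]]].
split; first by case: H => [[-> _]|[-> _]].
split; first by case: H => [[-> _]|[-> _]].
by move=> z; rewrite !inE => /or3P [] /eqP ->.
Qed.

Definition fld (p : nat) : struc [:: 3; 3] :=
  @MkStruc [:: 3; 3] (fun x => x <= p.-1) (fld_rel p) (fld_ne p) (@fld_wf p).

Lemma fld_univ p x : prime p -> (univ (fld p) x <-> x < p).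
Proof. by move=> Hp /=; rewrite -ltnS prednK // prime_gt0. Qed.

Lemma fld_PF p : prime p -> cmem PF (fld p).
Proof.
move=> Hp; exists p; split => //; exists id.
split; first by move=> x /(fld_univ x Hp).
split => //.
split; first by move=> n Hn; exists n; split => //; apply/(fld_univ n Hp).
move=> a b c Ha Hb Hc; split.
- split.
    move=> [a' [b' [c' [[-> -> ->] [_ [_ [_ [[_ H]|[H _]]]]]]]]] //.
  by move=> H; exists a, b, c; do 4!split => //; left.
- split.
    move=> [a' [b' [c' [[-> -> ->] [_ [_ [_ [[H _]|[_ H]]]]]]]]] //.
  by move=> H; exists a, b, c; do 4!split => //; right.
Qed.

Lemma fld_iso p q : prime p -> prime q -> iso (fld p) (fld q) -> p = q.
Proof.
move=> Hp Hq H.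
exact: (iso_card (fun x => fld_univ x Hp) (fun x => fld_univ x Hq) H).
Qed.

Lemma double_mod0 x q : x < q -> (x + x) %% q = x -> x = 0.
Proof.
move=> Hx H.
have : (x + x == x + 0 %[mod q]) by rewrite H addn0 modn_small.
rewrite eqn_modDl mod0n modn_small // => /eqP //.
Qed.

Lemma inv_mod c q : prime q -> 0 < c < q -> exists u, (c * u) %% q = 1.
Proof.
move=> Hq /andP[Hc0 Hcq].
have Hcop : coprime c q.
  rewrite coprime_sym prime_coprime //; apply/negP => /(dvdn_leq Hc0).
  by rewrite leqNgt Hcq.
have [[u1 u2] /= Hu] := coprimeP _ Hc0 Hcop.
exists u1.
have Hle : u2 * q <= u1 * c by apply: ltnW; rewrite -subn_gt0 Hu.
have -> : c * u1 = u2 * q + 1 by rewrite mulnC -(subnK Hle) Hu addnC.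
by rewrite modnMDl modn_small // prime_gt1.
Qed.

Lemma PF_sub (B B' : struc [:: 3; 3]) : cmem PF B -> cmem PF B' ->
  (forall l, diag B l -> diag B' l) -> iso B B'.
Proof.
move=> [p [Hp [f [f1 [f2 [f3 f4]]]]]] [q [Hq [g [g1 [g2 [g3 g4]]]]]] Hsub.
have U : forall x, univ B x -> univ B' x.
  by move=> x /univ_diag /Hsub /univ_diag.
have Rl : forall i t, rel B i t -> rel B' i t.
  by move=> i t /rel_diag /Hsub /rel_diag.
have [z [Hz Ez]] := f3 0 (prime_gt0 Hp).
have [a [Ha Ea]] := f3 1 (prime_gt1 Hp).
have Hzzz : rel B 0 [:: z; z; z].
  by apply/((f4 z z z Hz Hz Hz).1); rewrite Ez add0n mod0n.
have gz : g z = 0.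
  have Hz' := U z Hz.
  apply: double_mod0 (g1 z Hz') _.
  exact: ((g4 z z z Hz' Hz' Hz').1.1 (Rl _ _ Hzzz)).
have Ha' := U a Ha.
have ga : g a != 0.
  apply/eqP => E; have : a = z by apply: g2 => //; [exact: U | rewrite E gz].
  by move=> Eaz; move: Ea; rewrite Eaz Ez.
have sq : forall k, exists x, univ B x /\ g x = (k * g a) %% q.
  elim=> [|k [x [Hx Ex]]]; first by exists z; rewrite gz mul0n mod0n.
  have [w [Hw Ew]] := f3 ((f x + 1) %% p) (ltn_pmod _ (prime_gt0 Hp)).
  have Hr : rel B 0 [:: x; a; w] by apply/((f4 x a w Hx Ha Hw).1); rewrite Ew Ea.
  have Hx' := U x Hx. have Hw' := U w Hw.
  exists w; split => //.
  have := (g4 x a w Hx' Ha' Hw').1.1 (Rl _ _ Hr).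
  rewrite Ex modnDml => <-.
  by rewrite mulSn addnC.
have Usub : forall y, univ B' y -> univ B y.
  move=> y Hy.
  have [u Hu] := inv_mod Hq (c := g a) ltac:(by rewrite lt0n ga g1).
  have [x [Hx Ex]] := sq (u * g y).
  suff <- : x = y by [].
  apply: g2 => //; first exact: U.
  rewrite Ex.
  have -> : u * g y * g a = g y * (g a * u) by rewrite [u * g y]mulnC -mulnA [u * g a]mulnC.
  by rewrite -modnMmr Hu muln1 modn_small // g1.
apply: diag_iso => l; split; first exact: Hsub.
case: l => bb s [Hw [Hc Hh]].
have Hc' : forall x, x \in s.2 -> univ B x by move=> x /Hc /Usub.
case: (classic (holds B s)) => Hs.
- have D : diag B (true, s) by split => //; split.
  have HB' : holds B' s by apply/((Hsub _ D).2.2).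
  have Hbb : bb = true by apply/Hh.
  split => //; split => //; rewrite Hbb; split => // _.
- have D : diag B (false, s) by split => //; split => //; split => // /Hs.
  have HB' : ~ holds B' s by move=> /((Hsub _ D).2.2).
  have Hbb : bb = false by move: Hh; case: bb {Hw Hc} => // Hh; case: HB'; apply/Hh.
  split => //; split => //; rewrite Hbb; split => // /Hs.
Qed.

Local Arguments iota : simpl never.

Definition task := (nat + (nat * (seq bool * seq bool)))%type.

Definition pre (f : nat -> bool) (v : seq bool) : bool :=
  v == [seq f i | i <- iota 0 (size v)].

Definition mx (F : nat -> nat) (l : seq nat) := foldr (fun n acc => maxn (F n) acc) 0 l.

Lemma mx_ge F l n : n \in l -> F n <= mx F l.
Proof.
elim: l => //= a l IH; rewrite inE => /orP [/eqP ->|/IH H].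
  by rewrite leq_maxl.
by apply: leq_trans H (leq_maxr _ _).
Qed.

Definition pickU (U : nat -> nat -> Prop) e b :=
  epsilon (inhabits 0) (fun m => U e m /\ b < m).

Definition stp (t : nat -> nat -> option nat) (U : nat -> nat -> Prop)
  (s : nat) (st : nat * seq nat) : nat * seq nat :=
  let: (b, P) := st in
  match @unpickle task s with
  | Some (inl e) => (maxn b (pickU U e b), P)
  | Some (inr (e, (u, v))) =>
      let cand := iota b.+1 (size P).+1 in
      (maxn (b + (size P).+1) (mx (fun n => odflt 0 (t e n)) cand), P ++ cand)
  | None => (b, P)
  end.

Fixpoint st t U (s : nat) : nat * seq nat :=
  if s is s'.+1 then stp t U s' (st t U s') else (2, [:: 1; 2]).

Definition cand t U s : seq nat :=
  match @unpickle task s with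
  | Some (inr _) => iota (st t U s).1.+1 (size (st t U s).2).+1
  | _ => [::]
  end.

Definition tgt f s : bool :=
  match @unpickle task s with
  | Some (inr (_, (_, v))) => pre f v
  | _ => false
  end.

Definition SS t U (f : nat -> bool) (n : nat) : Prop :=
  n = 1 \/ n = 2 \/ exists s, tgt f s /\ n \in cand t U s.


Lemma step_facts t U s :
  (st t U s).1 <= (st t U s.+1).1 /\
  (forall n, n \in cand t U s -> (st t U s).1 < n <= (st t U s.+1).1) /\
  (st t U s.+1).2 = (st t U s).2 ++ cand t U s.
Proof.
rewrite /cand /=; case: (st t U s) => b P /=.
case: (@unpickle task s) => [[e|[e [u v]]]|] /=.
- by split; [apply: leq_maxl | split => //; rewrite cats0].
- split; first by apply: leq_trans (leq_maxl _ _); apply: leq_addr.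
  split => //.
  move=> n; rewrite mem_iota => /andP [H1 H2]; rewrite H1 /=.
  apply: leq_trans (leq_maxl _ _).
  by move: H2; rewrite addSn ltnS.
- by split => //; split => //; rewrite cats0.
Qed.

Lemma bnd_mono t U s s' : s <= s' -> (st t U s).1 <= (st t U s').1.
Proof.
move=> /subnK <-; elim: (s' - s) => // k IH.
by rewrite addSn; apply: leq_trans IH (proj1 (step_facts t U _)).
Qed.

Lemma P_le t U s n : n \in (st t U s).2 -> n <= (st t U s).1.
Proof.
elim: s n => [|s IH] n; first by rewrite /= !inE => /orP [] /eqP ->.
have [H1 [H2 H3]] := step_facts t U s.
rewrite H3 mem_cat => /orP [/IH H|/H2 /andP [_ H]] //.
exact: leq_trans H H1.
Qed.

Lemma P_mono t U s s' : s <= s' -> {subset (st t U s).2 <= (st t U s').2}.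
Proof.
move=> /subnK <-; elim: (s' - s) => // k IH n Hn.
rewrite addSn (proj2 (proj2 (step_facts t U _))) mem_cat.
by rewrite IH.
Qed.

Lemma P_12 t U s : 1 \in (st t U s).2 /\ 2 \in (st t U s).2.
Proof.
by split; apply: (P_mono (leq0n s)); rewrite /= !inE.
Qed.

Lemma cand_P t U s s' n : s < s' -> n \in cand t U s -> n \in (st t U s').2.
Proof.
move=> Hs Hn; apply: (P_mono Hs).
by rewrite (proj2 (proj2 (step_facts t U _))) mem_cat Hn orbT.
Qed.

Lemma low t U f s n : SS t U f n -> n <= (st t U s).1 -> n \in (st t U s).2.
Proof.
move=> [->|[->|[s' [_ Hn]]]] Hle; try by have [] := P_12 t U s.
case: (ltnP s' s) => Hs; first exact: cand_P Hs Hn.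
have := (proj1 (proj2 (step_facts t U s'))) n Hn => /andP [H _].
have := bnd_mono t U Hs => H'.
by move: Hle; rewrite leqNgt (leq_ltn_trans H' H).
Qed.

Lemma mid t U f s n : SS t U f n -> (st t U s).1 < n -> n <= (st t U s.+1).1 ->
  tgt f s /\ n \in cand t U s.
Proof.
have b0 : forall s, 2 <= (st t U s).1 by move=> s0; apply: (bnd_mono t U (leq0n s0)).
move=> [->|[->|[s' [Ht Hn]]]] H1 H2.
- by move: (leq_ltn_trans (leq_trans (isT : 1 <= 2) (b0 s)) H1); rewrite ltnn.
- by move: (leq_ltn_trans (b0 s) H1); rewrite ltnn.
have [H3 H4] := andP ((proj1 (proj2 (step_facts t U s'))) n Hn).
case: (ltngtP s' s) => Hs.
- have := bnd_mono t U Hs => H5.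
  by rewrite ltnNge (leq_trans H4 H5) in H1.
- have := bnd_mono t U Hs => H5.
  by rewrite ltnNge (leq_trans H2 H5) in H3.
- by subst s'.
Qed.


Lemma SS_U t U f e : (forall N, exists m, U e m /\ N < m) ->
  exists m, U e m /\ ~ SS t U f m.
Proof.
move=> HU.
set s := pickle (inl e : task).
have Hs : @unpickle task s = Some (inl e) by rewrite pickleK.
set b := (st t U s).1.
have [Hm1 Hm2] : U e (pickU U e b) /\ b < pickU U e b.
  by apply: (epsilon_spec (inhabits 0) (fun m => U e m /\ b < m)); apply: HU.
exists (pickU U e b); split => // HS.
have Hb1 : (st t U s.+1).1 = maxn b (pickU U e b).
  by rewrite /= /b; case: (st t U s) => bb P; rewrite /stp Hs.
have := mid HS Hm2; rewrite Hb1 leq_maxr => /(_ isT) [_].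
by rewrite /cand Hs.
Qed.

Lemma SS_t t U f g e : f <> g ->
  exists n, SS t U g n /\ (t e n = None \/ (exists m, t e n = Some m /\ ~ SS t U f m) \/
    exists n', SS t U g n' /\ n' <> n /\ t e n' = t e n).
Proof.
move=> Hfg.
have [k Hk] : exists k, f k <> g k.
  apply: NNPP => H; apply: Hfg; apply: functional_extensionality => x.
  by apply: NNPP => Hx; apply: H; exists x.
set u := map f (iota 0 k.+1). set v := map g (iota 0 k.+1).
set s := pickle (inr (e, (u, v)) : task).
have Hs : @unpickle task s = Some (inr (e, (u, v))) by rewrite pickleK.
have Hgv : pre g v by rewrite /pre /v size_map size_iota.
have Hfv : ~~ pre f v.
  apply/negP; rewrite /pre /v size_map size_iota => /eqP E.
  have := congr1 (fun l : seq bool => nth false l k) E.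
  rewrite !(nth_map 0) ?size_iota // nth_iota // add0n => E'.
  by apply: Hk.
have Hb1 : (st t U s.+1).1 = maxn ((st t U s).1 + (size (st t U s).2).+1)
   (mx (fun n => odflt 0 (t e n)) (iota (st t U s).1.+1 (size (st t U s).2).+1)).
  rewrite [st t U s.+1]/st -/(st t U s).
  by case: (st t U s) => bb PP; rewrite /stp Hs.
set b := (st t U s).1 in Hb1 *. set P := (st t U s).2 in Hb1 *.
set F := fun n => odflt 0 (t e n) in Hb1 *.
have Hc : cand t U s = iota b.+1 (size P).+1 by rewrite /cand Hs.
have Hg : forall n, n \in cand t U s -> SS t U g n.
  by move=> n Hn; right; right; exists s; split => //; rewrite /tgt Hs.
apply: NNPP => Hno.
have H1 : forall n, n \in cand t U s -> t e n = Some (F n) /\ SS t U f (F n).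
  move=> n Hn; case E: (t e n) => [m|].
    have EF : F n = m by rewrite /F E.
    rewrite EF; split => //; apply: NNPP => Hm; apply: Hno; exists n; split; first exact: Hg.
    by right; left; exists m; split.
  by exfalso; apply: Hno; exists n; split; [exact: Hg | left].
have H2 : {in cand t U s &, injective F}.
  move=> n n' Hn Hn' EF; apply: NNPP => Hne; apply: Hno.
  exists n; split; first exact: Hg.
  right; right; exists n'; split; first exact: Hg.
  split; first by move=> E; apply: Hne; rewrite E.
  by rewrite (proj1 (H1 n Hn)) (proj1 (H1 n' Hn')) EF.
have U1 : uniq (map F (cand t U s)) by rewrite map_inj_in_uniq // Hc iota_uniq.
have S1 : {subset map F (cand t U s) <= P}.
  move=> m /mapP [n Hn ->].
  have [_ HS] := H1 n Hn.
  case: (leqP (F n) b) => Hle; first exact: low HS Hle.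
  have Hle2 : F n <= (st t U s.+1).1.
    by rewrite Hb1; apply: leq_trans (leq_maxr _ _); apply: mx_ge; rewrite -Hc.
  have [Ht _] := mid HS Hle Hle2.
  by move: Ht Hfv; rewrite /tgt Hs => ->.
have := uniq_leq_size U1 S1.
by rewrite size_map Hc size_iota ltnn.
Qed.

Definition mk2_rel (x y : nat) (r : bool) (i : nat) (t : seq nat) : Prop :=
  r = true /\ i = 0 /\ t = [:: x; y].

Lemma mk2_ne (x y : nat) : exists z : nat, z = x \/ z = y. Proof. by exists x; left. Qed.

Lemma mk2_wf x y r : forall i t, mk2_rel x y r i t ->
  i < size [:: 2] /\ size t = nth 0 [:: 2] i /\ (forall z, z \in t -> z = x \/ z = y).
Proof.
move=> i t [_ [-> ->]]; split => //; split => // z; rewrite !inE => /orP [] /eqP ->;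
by [left | right].
Qed.

Definition mk2 x y r : struc [:: 2] :=
  @MkStruc [:: 2] (fun z => z = x \/ z = y) (mk2_rel x y r) (mk2_ne x y) (@mk2_wf x y r).

Lemma mk2_fin x y r : finite_struc (mk2 x y r).
Proof.
exists [:: x; y] => z /=; rewrite !inE; split.
  by move=> [->|->]; rewrite eqxx ?orbT.
by move=> /orP [] /eqP ->; [left | right].
Qed.

Lemma diag_valid (A : struc [:: 2]) l : diag A l -> valid l.
Proof.
case: l => b [[|[|i]] t] [Hw [Hu Hh]] //=.
- move: Hw => /= /eqP; case: t Hu Hh => [|x [|y [|z t]]] // _ /= Hh _.
  case: (eqVneq x y) => Exy; first by rewrite (proj1 Hh Exy).
  case: b Hh => Hh //.
  by move: Exy; rewrite (proj2 Hh erefl) eqxx.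
- by move: Hw => /= ->.
Qed.

Lemma valid_fin (l : literal) : valid l ->
  exists C : struc [:: 2], finite_struc C /\ diag C l.
Proof.
case: l => b [j t] /= /orP [/andP [/eqP -> Ht]|/andP [/eqP -> Ht]].
- case: t Ht => [|x [|y [|z t]]] // _.
  exists (mk2 x y b); split; first exact: mk2_fin.
  split => //; split; first by move=> z; rewrite !inE => /orP [] /eqP ->; [left|right].
  by rewrite /= /mk2_rel; split; [move=> [] | move=> H; split].
- case: t Ht => [|x [|y [|z t]]] // /eqP ->.
  exists (mk2 x y false); split; first exact: mk2_fin.
  split => //; split; first by move=> z; rewrite !inE => /orP [] /eqP ->; [left|right].
  by split => /=; [move=> ->; rewrite eqxx | move=> /eqP].
Qed.

Lemma image_id (A : struc [:: 2]) l : image PhiId A l <-> diag A l.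
Proof.
split.
  by move=> [alpha [[/= -> _] H]]; apply: H; rewrite inE.
move=> H; exists [:: l]; split; first by split => //; apply: (diag_valid H).
by move=> a; rewrite inE => /eqP ->.
Qed.

Definition enc (i : instr) : bool * (nat * (nat * nat)) :=
  match i with INC r j => (false, (r, (j, 0))) | DEC r j k => (true, (r, (j, k))) end.
Definition decI (x : bool * (nat * (nat * nat))) : instr :=
  let: (b, (r, (j, k))) := x in if b then DEC r j k else INC r j.
Lemma encK : cancel enc decI. Proof. by case. Qed.

Definition mach (e : nat) : seq instr := map decI (odflt [::] (unpickle e)).
Lemma mach_surj M : mach (pickle (map enc M)) = M.
Proof. rewrite /mach pickleK /=; elim: M => //= i M ->; by rewrite encK. Qed.

Definition PhiM (M : seq instr) : pairT -> Prop := fun p => halts M (pickle p).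

Definition TT (M : seq instr) (n m : nat) : Prop :=
  exists B : struc [:: 2], (forall l, image (PhiM M) (lo n) l <-> diag B l) /\ iso (lo m) B.

Definition ttf (e n : nat) : option nat :=
  epsilon (inhabits None) (fun o => match o with
     | Some m => TT (mach e) n m | None => ~ (exists m, TT (mach e) n m) end).

Lemma tt_spec e n : match ttf e n with
  | Some m => TT (mach e) n m | None => ~ (exists m, TT (mach e) n m) end.
Proof.
rewrite /ttf; apply: (epsilon_spec (inhabits None) (fun o => match o with
     | Some m => TT (mach e) n m | None => ~ (exists m, TT (mach e) n m) end)).
case: (classic (exists m, TT (mach e) n m)) => [[m Hm]|H].
  by exists (Some m).
by exists None.
Qed.

Definition UUf (e n : nat) : Prop :=
  exists p, prime p /\ exists B : struc [:: 2],
    (forall l, image (PhiM (mach e)) (fld p) l <-> diag B l) /\ iso (lo n) B.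

Definition Kf (f : nat -> bool) : cls :=
  @MkCls [:: 2] (fun A => exists n, SS ttf UUf f n /\ iso (lo n) A).

Lemma image_ext L (Phi Phi' : pairT -> Prop) (A : struc L) :
  (forall p, Phi p <-> Phi' p) -> forall l, image Phi A l <-> image Phi' A l.
Proof.
move=> H l; split; move=> [alpha [H1 H2]]; exists alpha; split => //; by apply/H.
Qed.

Lemma image_mono L (Phi : pairT -> Prop) (A A' : struc L) :
  (forall l, diag A l -> diag A' l) -> forall l, image Phi A l -> image Phi A' l.
Proof.
move=> H l [alpha [H1 H2]]; exists alpha; split => // a Ha; apply: H; exact: H2.
Qed.

Lemma diag_eq_iso L (A B C : struc L) (Phi : pairT -> Prop) (D : struc L) :
  (forall l, image Phi D l <-> diag A l) -> (forall l, image Phi D l <-> diag B l) -> iso A B.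
Proof.
move=> HA HB; apply: diag_iso => l; split => [/HA /HB|/HB /HA] //.
Qed.

Lemma TT_fun M n m m' : TT M n m -> TT M n m' -> m = m'.
Proof.
move=> [B [HB1 HB2]] [B' [HB1' HB2']].
have H : iso B B' by apply: diag_iso => l; split => [/HB1 /HB1'|/HB1' /HB1].
apply: lo_iso; apply: (iso_trans HB2); apply: (iso_trans H); exact: iso_sym.
Qed.

Lemma K_isoc f : iso_closed (Kf f).
Proof.
move=> A B [n [Hn H1]] H2; exists n; split => //; exact: iso_trans H1 H2.
Qed.

Lemma K_FLO f : le_c (Kf f) FLO.
Proof.
exists PhiId; split.
- split; first by exists Mid => p; exact: Mid_spec.
  split.
    move=> [alpha l] [/= Hp Hv].
    have [C [HC HCl]] := valid_fin Hv.
    split; last exact: (proj1 HCl).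
    by exists C; split => // a; rewrite Hp inE => /eqP ->.
  move=> A [n [_ Hn]]; exists A; split; [exact: lo_FLO Hn | exact: image_id].
- move=> A A' B B' _ _ HB HB'.
  have iAB : iso A B by apply: diag_iso => l; rewrite -image_id; apply: HB.
  have iAB' : iso A' B' by apply: diag_iso => l; rewrite -image_id; apply: HB'.
  split => H.
    exact: iso_trans (iso_sym iAB) (iso_trans H iAB').
  exact: iso_trans iAB (iso_trans H (iso_sym iAB')).
Qed.

Lemma memK f n : SS ttf UUf f n -> cmem (Kf f) (lo n).
Proof. by move=> H; exists n; split => //; apply: iso_refl. Qed.

Lemma K_notPF f : ~ le_c (Kf f) PF.
Proof.
move=> [Phi [[_ [_ H3]] H4]].
have m1 := memK (or_introl (erefl 1) : SS ttf UUf f 1).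
have m2 := memK (or_intror (or_introl (erefl 2)) : SS ttf UUf f 2).
have [B1 [HB1 HI1]] := H3 (lo 1) m1.
have [B2 [HB2 HI2]] := H3 (lo 2) m2.
have sub : forall l, diag B1 l -> diag B2 l.
  move=> l /HI1 /(image_mono (A' := lo 2)) H; apply/HI2; apply: H.
  by move=> l'; apply: diag_lo_mono.
have := (H4 (lo 1) (lo 2) B1 B2 m1 m2 HI1 HI2).2 (PF_sub HB1 HB2 sub).
by move=> /lo_iso.
Qed.

Fixpoint pr (k : nat) : nat :=
  if k is k'.+1 then sval (prime_above (pr k')) else sval (prime_above 0).

Lemma pr_prime k : prime (pr k).
Proof. by case: k => [|k] /=; case: prime_above. Qed.

Lemma pr_lt k : pr k < pr k.+1.
Proof. by rewrite /=; case: prime_above. Qed.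

Lemma pr_mono i j : i < j -> pr i < pr j.
Proof.
move=> /subnK <-; elim: (j - i.+1) => [|k IH]; first by rewrite add0n pr_lt.
by apply: ltn_trans IH _; rewrite addSn pr_lt.
Qed.

Lemma pr_inj i j : pr i = pr j -> i = j.
Proof.
move=> E; case: (ltngtP i j) => // H.
  by have := pr_mono H; rewrite E ltnn.
by have := pr_mono H; rewrite E ltnn.
Qed.

Lemma PF_notK f : ~ le_c PF (Kf f).
Proof.
move=> [Phi [[[M HM] [_ H3]] H4]].
set e := pickle (map enc M).
have Hme : mach e = M by apply: mach_surj.
have Himg : forall L (A : struc L) l, image Phi A l <-> image (PhiM (mach e)) A l.
  by move=> L A l; apply: image_ext => p; rewrite Hme HM.
pose P p n := SS ttf UUf f n /\ exists B : struc [:: 2],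
   (forall l, image Phi (fld p) l <-> diag B l) /\ iso (lo n) B.
pose np p := epsilon (inhabits 0) (P p).
have np_spec : forall p, prime p -> P p (np p).
  move=> p Hp; apply: (epsilon_spec (inhabits 0) (P p)).
  have [B [[n [Sn Hn]] HI]] := H3 (fld p) (fld_PF Hp).
  by exists n; split => //; exists B.
have np_U : forall p, prime p -> UUf e (np p).
  move=> p Hp; have [_ [B [HI Hi]]] := np_spec p Hp.
  exists p; split => //; exists B; split => // l; rewrite -Himg; exact: HI.
have np_inj : forall p q, prime p -> prime q -> np p = np q -> p = q.
  move=> p q Hp Hq E.
  have [_ [B [HI Hi]]] := np_spec p Hp.
  have [_ [B' [HI' Hi']]] := np_spec q Hq.
  have HBB : iso B B'.
    by apply: iso_trans (iso_sym Hi) _; rewrite E.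
  exact: (fld_iso Hp Hq ((H4 (fld p) (fld q) B B' (fld_PF Hp) (fld_PF Hq) HI HI').2 HBB)).
case: (classic (forall N, exists m, UUf e m /\ N < m)) => HU.
- have [m [[p [Hp [B [HI Hi]]]] Hns]] := SS_U ttf f HU.
  have [Sn [B' [HI' Hi']]] := np_spec p Hp.
  apply: Hns.
  have HBB : iso B B'.
    by apply: diag_iso => l; split => [/HI /Himg /HI'|/HI' /Himg /HI].
  have -> : m = np p.
    by apply: lo_iso; apply: (iso_trans Hi); apply: (iso_trans HBB); exact: iso_sym.
  exact: Sn.
- have [N HN] : exists N, forall m, UUf e m -> m <= N.
    apply: NNPP => H; apply: HU => N; apply: NNPP => H'; apply: H; exists N => m Hm.
    by rewrite leqNgt; apply/negP => Hlt; apply: H'; exists m.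
  have := inj_card (f := fun i => np (pr i)) (a := N.+2) (b := N.+1).
  rewrite ltnn => H; apply: notF; apply: H.
    by move=> x _; rewrite ltnS; apply: HN; apply: np_U; apply: pr_prime.
  move=> x y _ _ E; apply: pr_inj; apply: np_inj => //; exact: pr_prime.
Qed.

Lemma KK f g : f <> g -> ~ le_c (Kf g) (Kf f).
Proof.
move=> Hfg [Phi [[[M HM] [_ H3]] H4]].
set e := pickle (map enc M).
have Hme : mach e = M by apply: mach_surj.
have Himg : forall L (A : struc L) l, image Phi A l <-> image (PhiM (mach e)) A l.
  by move=> L A l; apply: image_ext => p; rewrite Hme HM.
have emb : forall n, SS ttf UUf g n -> exists m, SS ttf UUf f m /\ TT (mach e) n m.
  move=> n Hn; have [B [[m [Sm Hm]] HI]] := H3 (lo n) (memK Hn).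
  exists m; split => //; exists B; split => // l; rewrite -Himg; exact: HI.
have tt_some : forall n, SS ttf UUf g n -> exists m, SS ttf UUf f m /\ ttf e n = Some m.
  move=> n Hn; have [m [Sm Tm]] := emb n Hn.
  have := tt_spec e n; case: (ttf e n) => [m'|] Hs.
    by exists m'; split => //; rewrite (TT_fun Hs Tm).
  by case: Hs; exists m.
have [n [Sn Hc]] := SS_t ttf UUf e Hfg.
have [m [Sm Em]] := tt_some n Sn.
case: Hc => [|[]].
- by rewrite Em.
- by move=> [m0 [E0 Hns]]; apply: Hns; move: E0; rewrite Em => -[<-].
- move=> [n' [Sn' [Hne E']]].
  have [m' [Sm' Em']] := tt_some n' Sn'.
  have T1 := tt_spec e n; rewrite Em in T1.
  have T2 := tt_spec e n'; rewrite Em' in T2.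
  have Emm : m' = m by move: E'; rewrite Em Em' => -[].
  rewrite Emm in T2.
  move: T1 T2 => [B [HI Hi]] [B' [HI' Hi']].
  apply: Hne; apply: lo_iso.
  have HIa : forall l, image Phi (lo n') l <-> diag B' l by move=> l; rewrite Himg.
  have HIb : forall l, image Phi (lo n) l <-> diag B l by move=> l; rewrite Himg.
  apply: ((H4 (lo n') (lo n) B' B (memK Sn') (memK Sn) HIa HIb).2).
  exact: iso_trans (iso_sym Hi') Hi.
Qed.

Theorem proposition4p3 :
  exists K : (nat -> bool) -> cls,
    (forall f, iso_closed (K f)) /\
    (forall f, le_c (K f) FLO /\ incomp (K f) PF) /\
    (forall f g, f <> g -> incomp (K f) (K g)).
Proof.
exists Kf; split; first exact: K_isoc.
split.
  by move=> f; split; [exact: K_FLO | split; [exact: K_notPF | exact: PF_notK]].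
move=> f g Hfg; split.
  by apply: KK => E; apply: Hfg.
exact: KK.
Qed.
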